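(* For $n\ge2$ and variables $x_1,\dots,x_{n-1}$, $y_1,\dots,y_{n-1}$, $z_1,\dots,z_n$, define $$\hat P_n=\sum_{\sigma\in S_n}(-1)^{\ell(\sigma)}\prod_{m=1}^{n-1}\Big(\prod_{k=1}^{m}(1+y_mz_{\sigma(k)})\prod_{k=m+1}^{n}(1-x_mz_{\sigma(k)})\Big),$$ where $\ell(\sigma)$ is the length (number of inversions) of $\sigma$. Then $$\hat P_n=\prod_{i=1}^{n-1}(x_i+y_i)\prod_{1\le i<j\le n-1}(x_i+y_j)\prod_{1\le i<j\le n}(z_i-z_j).$$ *)

(* Defs.v *)
From HB Require Import structures.
From mathcomp Require Import all_boot all_order all_algebra all_fingroup.
Set Implicit Arguments. Unset Strict Implicit. Unset Printing Implicit Defensive.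
Import Order.TTheory GRing.Theory Num.Theory.

(* Main.v *)
Require Import Defs.
From HB Require Import structures.
From mathcomp Require Import all_boot all_order all_algebra all_fingroup.
From mathcomp Require Import zify ring.
Set Implicit Arguments. Unset Strict Implicit. Unset Printing Implicit Defensive.
Import GRing.Theory.
Local Open Scope ring_scope.
Section S.
Variable R : comNzRingType.

Definition lf (c : R) : {poly R} := 1 + c *: 'X.
Definition Gp (N : nat) (xs ys : nat -> R) (k : nat) : {poly R} :=
  \prod_(m < N) lf (if (k <= m)%N then - ys m else xs m).

Lemma size_lf c : (size (lf c) <= 2)%N.
Proof.
rewrite /lf; apply: leq_trans (size_polyD _ _) _.
by rewrite geq_max size_poly1 (leq_trans (size_scale_leq _ _)) // size_polyX.
Qed.

Lemma size_prod_lf (c : nat -> R) N : (size (\prod_(m < N) lf (c m))%R <= N.+1)%N.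
Proof.
elim: N => [|N IH]; first by rewrite big_ord0 size_poly1.
rewrite big_ord_recr /=; apply: leq_trans (size_mul_leq _ _) _.
have := size_lf (c (@ord_max N)). move: IH. set a := size _. set b := size _. lia.
Qed.

Lemma size_Gp N xs ys k : (size (Gp N xs ys k) <= N.+1)%N.
Proof. exact: (size_prod_lf (fun m => if (k <= m)%N then - ys m else xs m)). Qed.

Lemma horner_lf c t : (lf c).[t] = 1 + c * t.
Proof. by rewrite /lf hornerD hornerZ hornerX hornerC. Qed.

Lemma Gp_rec N xs ys k :
  Gp N.+1 xs ys k = lf (if k is 0 then - ys 0 else xs 0) *
                    Gp N (fun m => xs m.+1) (fun m => ys m.+1) k.-1.
Proof.
rewrite /Gp big_ord_recl /=; congr (_ * _); first by case: k.
by apply: eq_bigr => i _; case: k.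
Qed.

Lemma Gp0 N xs xs' ys : Gp N xs ys 0 = Gp N xs' ys 0.
Proof. by apply: eq_bigr. Qed.

Lemma Gp_diff N xs ys k : (k < N.+1)%N ->
  Gp N.+1 xs ys k.+1 - Gp N.+1 xs ys k =
  (xs k + ys k) *: ('X * Gp N xs (fun m => ys m.+1) k).
Proof.
elim: k N xs ys => [|k IH] N xs ys hk.
  rewrite !Gp_rec /= (Gp0 N xs (fun m => xs m.+1)) -mulrBl /lf scalerAl.
  rewrite -!mul_polyC rmorphN rmorphD /=; ring.
case: N hk => [//|N] hk.
rewrite [Gp _ _ _ k.+2]Gp_rec [Gp _ _ _ k.+1]Gp_rec /= -mulrBr IH //.
rewrite [Gp N.+1 _ _ _]Gp_rec /=.
by rewrite -!scalerAr; congr (_ *: _); rewrite mulrCA.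
Qed.

Lemma coef0_Gp N xs ys k : (Gp N xs ys k)`_0 = 1.
Proof.
rewrite -horner_coef0 /Gp horner_prod big1 // => i _.
by rewrite horner_lf mulr0 addr0.
Qed.
End S.
Section S2.
Variable R : comNzRingType.

Lemma prod_pairs (f : nat -> nat -> R) N :
  \prod_(i < N.+1) \prod_(j < N.+1 | (i < j)%N) f i j =
  \prod_(i < N) f i i.+1 * \prod_(i < N) \prod_(j < N | (i < j)%N) f i j.+1.
Proof.
rewrite big_ord_recr /= [X in _ * X]big1 ?mulr1; last by move=> j; rewrite ltnNge -ltnS ltn_ord.
rewrite -big_split /=; apply: eq_bigr => i _.
rewrite big_mkcond big_ord_recl /= mul1r.
rewrite (eq_bigr (fun j : 'I_N => if (i <= j)%N then f i j.+1 else 1)); last first.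
  by move=> j _; rewrite /bump leq0n add1n ltnS.
rewrite -(big_mkcond (fun j : 'I_N => (i <= j)%N) (fun j : 'I_N => f i j.+1)) (bigD1 i) //=; congr (_ * _).
by apply: eq_bigl => j; rewrite ltn_neqAle andbC eq_sym.
Qed.

Definition Cm N (xs ys : nat -> R) : 'M[R]_N.+1 := \matrix_(k, i) (Gp N xs ys k)`_i.

Lemma detCm N : forall xs ys, \det (Cm N xs ys) =
  \prod_(i < N) (xs i + ys i) * \prod_(i < N) \prod_(j < N | (i < j)%N) (xs i + ys j).
Proof.
elim: N => [|N IH] xs ys.
  by rewrite det_mx11 mxE coef0_Gp !big_ord0 mulr1.
set M := Cm N.+1 xs ys.
pose P : 'M[R]_N.+2 := \matrix_(k, l) ((k == (l.+1) :> nat)%:R).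
have detU : \det (1%:M - P) = 1.
  rewrite det_trig.
    by apply: big1 => i _; rewrite !mxE eqxx (ltn_eqF (ltnSn i)) subr0.
  apply/forallP => i; apply/forallP => j; apply/implyP => lt; rewrite !mxE.
  have h1 : (i == j) = false by apply: (ltn_eqF lt).
  rewrite h1 (_ : (i == j.+1 :> nat) = false) ?subr0 //.
  by apply/negbTE; rewrite neq_ltn (ltn_trans lt).
have -> : \det M = \det ((1%:M - P) *m M) by rewrite det_mulmx detU mul1r.
have WE : forall k i, ((1%:M - P) *m M) k i = M k i - (P *m M) k i.
  by move=> k i; rewrite mulmxBl mul1mx [LHS]mxE [X in _ + X]mxE.
have PMS : forall (k : 'I_N.+1) i, (P *m M) (lift ord0 k) i = M (widen_ord (leqnSn _) k) i.
  move=> k i; rewrite mxE (bigD1 (widen_ord (leqnSn _) k)) //= big1.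
    by rewrite !mxE lift0 eqxx mul1r addr0.
  move=> l hl; rewrite mxE lift0 eqSS.
  rewrite (_ : (k == l :> nat) = false) ?mul0r //.
  by apply/negbTE; apply: contra hl => /eqP h; apply/eqP/val_inj.
rewrite (expand_det_col _ ord0) [in LHS]big_ord_recl [X in _ + X]big1 ?addr0; last first.
  by move=> k _; rewrite WE PMS !mxE !coef0_Gp subrr mul0r.
have PM0 : forall i, (P *m M) ord0 i = 0.
  by move=> i; rewrite mxE big1 // => l _; rewrite mxE mul0r.
rewrite WE PM0 subr0 mxE coef0_Gp mul1r /cofactor expr0 mul1r.
have -> : row' ord0 (col' ord0 ((1%:M - P) *m M)) =
    diag_mx (\row_k (xs k + ys k)) *m Cm N xs (fun m => ys m.+1).
  apply/matrixP => k i; rewrite mul_diag_mx [LHS]mxE [LHS]mxE WE PMS !mxE.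
  by rewrite !lift0 /= -coefB Gp_diff // coefZ coefXM /=.

rewrite (@det_mulmx R N.+1) det_diag IH.
rewrite (prod_pairs (fun i j => xs i + ys j)).
rewrite [in RHS]big_ord_recr /=.
under eq_bigr do rewrite mxE.
rewrite big_ord_recr /=; ring.
Qed.
End S2.
Lemma split_if (R : comNzRingType) n (m : nat) (F G : 'I_n -> R) :
  \prod_(k < n | (k <= m)%N) F k * \prod_(k < n | (m < k)%N) G k =
  \prod_(k < n) (if (k <= m)%N then F k else G k).
Proof.
rewrite big_mkcond [X in _ * X]big_mkcond -big_split /=; apply: eq_bigr => k _.
by case: leqP => _; rewrite ?mulr1 ?mul1r.
Qed.

Theorem mainTheorem7 (R : comNzRingType) (n : nat) (hn : (2 <= n)%N)
    (x y : 'I_n.-1 -> R) (z : 'I_n -> R) :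
  \sum_(s : 'S_n) (-1) ^+ odd_perm s *
     \prod_(m < n.-1)
        ((\prod_(k < n | (k <= m)%N) (1 + y m * z (s k))) *
         (\prod_(k < n | (m < k)%N) (1 - x m * z (s k))))
  = (\prod_(i < n.-1) (x i + y i)) *
    (\prod_(i < n.-1) \prod_(j < n.-1 | (i < j)%N) (x i + y j)) *
    (\prod_(i < n) \prod_(j < n | (i < j)%N) (z i - z j)).
Proof.
case: n hn x y z => [|[|n']] // hn x y z /=.
pose xs := fun m : nat => x (inord m).
pose ys := fun m : nat => y (inord m).
pose A : 'M[R]_n'.+2 := \matrix_(k, j) (Gp n'.+1 xs ys k).[- z j].
have -> : \sum_(s : 'S_n'.+2) (-1) ^+ odd_perm s *
     \prod_(m < n'.+1)
        ((\prod_(k < n'.+2 | (k <= m)%N) (1 + y m * z (s k))) *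
         (\prod_(k < n'.+2 | (m < k)%N) (1 - x m * z (s k)))) = \det A.
  apply: eq_bigr => s _; congr (_ * _).
  rewrite (eq_bigr (fun m : 'I_n'.+1 => \prod_(k < n'.+2) (if (k <= m)%N then 1 + y m * z (s k) else 1 - x m * z (s k)))); last by move=> m _; rewrite split_if.
  rewrite exchange_big /=; apply: eq_bigr => k _.
  rewrite mxE /Gp horner_prod; apply: eq_bigr => m _.
  rewrite horner_lf /xs /ys inord_val.
  by case: leqP => _; rewrite ?mulrNN ?mulrN.
have -> : A = Cm n'.+1 xs ys *m Vandermonde n'.+2 (\row_j - z j).
  apply/matrixP => k j; rewrite !mxE (horner_coef_wide _ (size_Gp _ _ _ _)).
  by apply: eq_bigr => i _; rewrite !mxE.
rewrite det_mulmx detCm det_Vandermonde.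
congr (_ * _ * _).
- by apply: eq_bigr => i _; rewrite /xs /ys inord_val.
- by apply: eq_bigr => i _; apply: eq_bigr => j _; rewrite /xs /ys !inord_val.
- apply: eq_bigr => i _; apply: eq_bigr => j _; rewrite !mxE opprK addrC.
  done.
Qed.
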